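(* Let $k\ge1$ be an integer, $\rho\ne0$ real, $0\le q<1$, and $z$ a complex number. Then, as formal power series in $t$, $$(1+\rho t)^{z/\rho}\,{\rm Lif}_{k,q}\!\left(-\frac{\ln(1+\rho t)}{\rho}\right)=\sum_{n=0}^\infty \widehat c_{n,\rho,q}^{(k)}(z)\frac{t^n}{n!},$$ where $(1+\rho t)^{z/\rho}=\exp\!\big(\tfrac{z}{\rho}\ln(1+\rho t)\big)$.
   Context: For real $0\le q<1$ (with $0^0=1$), $[x]_q=\frac{1-q^x}{1-q}$. The $q$-polyfactorial function is ${\rm Lif}_{k,q}(w)=\sum_{n=0}^\infty\frac{w^n}{n!\,[n+1]_q^k}$. Jackson's $q$-integral: $\int_0^1 f(x)\,d_qx=(1-q)\sum_{j\ge0} f(q^j)q^j$; multiple integrals are iterated. $(x)_n=x(x-1)\cdots(x-n+1)$, $(x)_0=1$. The $q$-poly-Cauchy polynomials of the second kind with parameter $\rho$ are $\widehat c_{n,\rho,q}^{(k)}(z)=\rho^n\int_0^1\cdots\int_0^1\left(\frac{-x_1\cdots x_k+z}{\rho}\right)_n d_qx_1\cdots d_qx_k$ ($k$-fold). *)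

(* Defs.v *)
From Stdlib Require Import Reals Arith ClassicalEpsilon List.
Open Scope R_scope.

Record Cx := mkCx { Cre : R ; Cim : R }.
Definition Cof (r : R) : Cx := mkCx r 0.
Definition C0 : Cx := Cof 0.
Definition C1 : Cx := Cof 1.
Definition Cadd (a b : Cx) : Cx := mkCx (Cre a + Cre b) (Cim a + Cim b).
Definition Copp (a : Cx) : Cx := mkCx (- Cre a) (- Cim a).
Definition Csub (a b : Cx) : Cx := Cadd a (Copp b).
Definition Cmul (a b : Cx) : Cx :=
  mkCx (Cre a * Cre b - Cim a * Cim b) (Cre a * Cim b + Cim a * Cre b).
Definition Cscale (r : R) (a : Cx) : Cx := mkCx (r * Cre a) (r * Cim a).

Fixpoint Csum (f : nat -> Cx) (n : nat) : Cx :=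
  match n with O => C0 | S m => Cadd (Csum f m) (f m) end.
Fixpoint Cprod (f : nat -> Cx) (n : nat) : Cx :=
  match n with O => C1 | S m => Cmul (Cprod f m) (f m) end.

Definition Cfalling (x : Cx) (n : nat) : Cx :=
  Cprod (fun i => Csub x (Cof (INR i))) n.

Definition Rseries (u : nat -> R) : R :=
  epsilon (inhabits 0) (fun l => Un_cv (fun N => sum_f_R0 u N) l).
Definition Cseries (u : nat -> Cx) : Cx :=
  mkCx (Rseries (fun j => Cre (u j))) (Rseries (fun j => Cim (u j))).

(** q-number [x]_q = (1 - q^x)/(1 - q) for natural x (with 0^0 = 1) *)
Definition qnum (q : R) (x : nat) : R := (1 - q ^ x) / (1 - q).

(** Jackson q-integral  int_0^1 f(x) d_q x = (1-q) sum_j f(q^j) q^j *)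
Definition jackson (q : R) (f : R -> Cx) : Cx :=
  Cscale (1 - q) (Cseries (fun j => Cscale (q ^ j) (f (q ^ j)))).

Fixpoint jackson_iter (q : R) (k : nat) (F : list R -> Cx) : Cx :=
  match k with
  | O => F nil
  | S k' => jackson q (fun x => jackson_iter q k' (fun xs => F (x :: xs)))
  end.

Definition prodR (xs : list R) : R := fold_right Rmult 1 xs.

Definition qpolyCauchy2 (k : nat) (rho q : R) (n : nat) (z : Cx) : Cx :=
  Cscale (rho ^ n)
    (jackson_iter q k (fun xs =>
       Cfalling (Cscale (/ rho) (Csub z (Cof (prodR xs)))) n)).

Definition fps := nat -> Cx.
Definition fps_one : fps := fun n => match n with O => C1 | _ => C0 end.
Definition fps_mul (a b : fps) : fps :=
  fun n => Csum (fun i => Cmul (a i) (b (n - i)%nat)) (S n).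
Fixpoint fps_pow (g : fps) (m : nat) : fps :=
  match m with O => fps_one | S m' => fps_mul g (fps_pow g m') end.
Definition fps_scale (c : Cx) (g : fps) : fps := fun n => Cmul c (g n).
(** composition f(g(t)) of f = sum a_m w^m with a series g with g_0 = 0 *)
Definition fps_comp (a : nat -> Cx) (g : fps) : fps :=
  fun n => Csum (fun m => Cmul (a m) (fps_pow g m n)) (S n).

Definition fps_log1p (rho : R) : fps :=
  fun n => match n with
           | O => C0
           | S m => Cof ((-1) ^ m * rho ^ n / INR n)
           end.
Definition exp_coeff : nat -> Cx := fun n => Cof (/ INR (fact n)).
Definition Lif_coeff (k : nat) (q : R) : nat -> Cx :=
  fun n => Cof (/ (INR (fact n) * qnum q (S n) ^ k)).

Definition lhs_series (k : nat) (rho q : R) (z : Cx) : fps :=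
  fps_mul (fps_comp exp_coeff (fps_scale (Cscale (/ rho) z) (fps_log1p rho)))
          (fps_comp (Lif_coeff k q) (fps_scale (Cof (- / rho)) (fps_log1p rho))).

(* Main.v *)
Require Import Defs.
From Stdlib Require Import Reals Arith Lia ClassicalEpsilon FunctionalExtensionality Lra.
Import Defs.
Open Scope R_scope.

Lemma Cx_ext (a b : Cx) : Cre a = Cre b -> Cim a = Cim b -> a = b.
Proof. destruct a, b; simpl; intros -> ->; reflexivity. Qed.

Ltac cxs := apply Cx_ext; cbn [Cre Cim Cadd Cmul Copp Csub Cscale Cof C0 C1 fps_one].
Ltac cx := cxs; ring.

Fixpoint Cpow (c : Cx) (m : nat) : Cx :=
  match m with O => C1 | S m' => Cmul c (Cpow c m') end.

Lemma Csum_ext f g n : (forall i, (i < n)%nat -> f i = g i) -> Csum f n = Csum g n.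
Proof. induction n; intros H; simpl; auto. rewrite IHn by (intros; apply H; lia). rewrite H by lia; auto. Qed.

Lemma Csum_add f g n : Csum (fun i => Cadd (f i) (g i)) n = Cadd (Csum f n) (Csum g n).
Proof. induction n; simpl. cx. rewrite IHn. cx. Qed.

Lemma Csum_mul_l c f n : Csum (fun i => Cmul c (f i)) n = Cmul c (Csum f n).
Proof. induction n; simpl. cx. rewrite IHn. cx. Qed.

Lemma Csum_zero f n : (forall i, (i < n)%nat -> f i = C0) -> Csum f n = C0.
Proof. induction n; intros H; simpl; auto. rewrite IHn by (intros; apply H; lia). rewrite H by lia. cx. Qed.

Lemma Csum_S_l f n : Csum f (S n) = Cadd (f O) (Csum (fun i => f (S i)) n).
Proof. induction n. simpl. cx. change (Csum f (S (S n))) with (Cadd (Csum f (S n)) (f (S n))).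
 rewrite IHn. simpl. cx. Qed.

Lemma Csum_trunc f N n : (n <= N)%nat -> (forall i, (n <= i < N)%nat -> f i = C0) ->
  Csum f N = Csum f n.
Proof. induction N; intros H1 H2. assert (n = O) by lia. subst; auto.
 destruct (Nat.eq_dec n (S N)). subst; auto.
 simpl. rewrite IHN by (try lia; intros; apply H2; lia). rewrite H2 by lia. cx. Qed.

Lemma Csum_swap (F : nat -> nat -> Cx) N M :
  Csum (fun i => Csum (fun j => F i j) M) N = Csum (fun j => Csum (fun i => F i j) N) M.
Proof. induction N; simpl. symmetry; apply Csum_zero; auto.
 rewrite IHN. rewrite <- Csum_add. reflexivity. Qed.

Lemma split_mul (A B : fps) n :
  Cmul (Cof (INR (S n))) (fps_mul A B (S n)) =
  Cadd (Csum (fun i => Cmul (Cmul (Cof (INR (S i))) (A (S i))) (B (n - i)%nat)) (S n))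
       (Csum (fun i => Cmul (A i) (Cmul (Cof (INR (S (n - i)))) (B (S (n - i))))) (S n)).
Proof.
  unfold fps_mul. rewrite <- Csum_mul_l.
  rewrite (Csum_ext _ (fun i => Cadd (Cmul (Cmul (Cof (INR i)) (A i)) (B (S n - i)%nat))
     (Cmul (A i) (Cmul (Cof (INR (S n - i))) (B (S n - i)%nat))))).
  2:{ intros i Hi. rewrite (minus_INR (S n) i) by lia. cx. }
  rewrite Csum_add. f_equal.
  - rewrite Csum_S_l. replace (Cmul (Cmul (Cof (INR 0)) (A O)) (B (S n - 0)%nat)) with C0 by (simpl; cx).
    rewrite (Csum_ext (fun i => Cmul (Cmul (Cof (INR (S i))) (A (S i))) (B (S n - S i)%nat))
      (fun i => Cmul (Cmul (Cof (INR (S i))) (A (S i))) (B (n - i)%nat))) by reflexivity.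
    cx.
  - change (Csum ?f (S (S n))) with (Cadd (Csum f (S n)) (f (S n))).
    cbv beta. rewrite Nat.sub_diag. replace (Cof (INR 0)) with C0 by reflexivity.
    rewrite (Csum_ext _ (fun i => Cmul (A i) (Cmul (Cof (INR (S (n - i)))) (B (S (n - i)))))).
    2:{ intros i Hi. replace (S n - i)%nat with (S (n - i)) by lia. reflexivity. }
    cx.
Qed.

Lemma mul_one_r (g : fps) n : fps_mul g fps_one n = g n.
Proof. unfold fps_mul. simpl. rewrite Csum_zero. rewrite Nat.sub_diag. cx.
 intros i Hi. destruct (n - i)%nat eqn:E. lia. simpl. cx. Qed.

Lemma mul_one_l (g : fps) n : fps_mul fps_one g n = g n.
Proof. unfold fps_mul. rewrite Csum_S_l. rewrite Csum_zero. rewrite Nat.sub_0_r. simpl. cx.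
 intros i Hi. simpl. cx. Qed.

Lemma pow_vanish (g : fps) : g O = C0 -> forall m j, (j < m)%nat -> fps_pow g m j = C0.
Proof. intros H0 m. induction m; intros j Hj. lia. simpl. unfold fps_mul.
 apply Csum_zero. intros i Hi. destruct i. rewrite H0. cx.
 rewrite IHm by lia. cx. Qed.

Lemma pow_scale c (g : fps) m n : fps_pow (fps_scale c g) m n = Cmul (Cpow c m) (fps_pow g m n).
Proof. revert n; induction m; intros n; simpl. unfold fps_one; destruct n; cx.
 unfold fps_mul, fps_scale. rewrite <- Csum_mul_l. apply Csum_ext. intros i Hi. rewrite IHm. cx. Qed.

Lemma comp_range a (g : fps) n N : g O = C0 -> (S n <= N)%nat ->
  fps_comp a g n = Csum (fun m => Cmul (a m) (fps_pow g m n)) N.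
Proof. intros H0 HN. unfold fps_comp. symmetry. apply Csum_trunc. auto.
 intros i Hi. rewrite pow_vanish by (auto; lia). cx. Qed.

Section Log.
Variable rho : R.
Let L := fps_log1p rho.
Let p := fps_pow L.

Lemma L0 : L O = C0.
Proof. reflexivity. Qed.

Lemma Klem i : Cadd (Cmul (Cof (INR (S i))) (L (S i))) (Cmul (Cof rho) (Cmul (Cof (INR i)) (L i)))
   = Cmul (Cof rho) (fps_one i).
Proof.
  unfold L, fps_log1p. destruct i.
  - cxs; cbn [pow INR]; field.
  - cxs. 2: ring. cbn [pow].
    assert (INR (S (S i)) <> 0) by (apply not_0_INR; lia).
    assert (INR (S i) <> 0) by (apply not_0_INR; lia).
    field. auto.
Qed.

Lemma Rrec m : forall n,
  Cadd (Cmul (Cof (INR (S n))) (p (S m) (S n))) (Cmul (Cof rho) (Cmul (Cof (INR n)) (p (S m) n)))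
  = Cmul (Cof rho) (Cmul (Cof (INR (S m))) (p m n)).
Proof.
  induction m; intros n.
  - unfold p. change (fps_pow L 1) with (fps_mul L fps_one). rewrite !mul_one_r.
    rewrite Klem. change (fps_pow L 0) with fps_one. cxs; cbn [INR]; ring.
  - unfold p at 1 2. change (fps_pow L (S (S m))) with (fps_mul L (p (S m))).
    rewrite split_mul.
    unfold fps_mul at 1. rewrite <- !Csum_mul_l, <- !Csum_add.
    rewrite (Csum_ext _ (fun i => Cadd (Cmul (Cof rho) (Cmul (fps_one i) (p (S m) (n - i)%nat)))
        (Cmul (Cof rho) (Cmul (Cof (INR (S m))) (Cmul (L i) (p m (n - i)%nat)))))).
    2:{ intros i Hi. transitivity (Cadd
          (Cmul (Cadd (Cmul (Cof (INR (S i))) (L (S i))) (Cmul (Cof rho) (Cmul (Cof (INR i)) (L i)))) (p (S m) (n - i)%nat))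
          (Cmul (L i) (Cadd (Cmul (Cof (INR (S (n - i)))) (p (S m) (S (n - i))))
              (Cmul (Cof rho) (Cmul (Cof (INR (n - i))) (p (S m) (n - i)%nat)))))).
        { rewrite (minus_INR n i) by lia. cx. }
        rewrite Klem, IHm. cx. }
    rewrite Csum_add, !Csum_mul_l.
    change (Csum (fun i => Cmul (fps_one i) (p (S m) (n - i)%nat)) (S n)) with (fps_mul fps_one (p (S m)) n).
    rewrite mul_one_l.
    change (Csum (fun i => Cmul (L i) (p m (n - i)%nat)) (S n)) with (p (S m) n).
    cxs; rewrite !S_INR; ring.
Qed.
End Log.

Lemma cancelS n X W : Cmul (Cof (INR (S n))) X = W -> X = Cmul (Cof (/ INR (S n))) W.
Proof. intros <-. assert (INR (S n) <> 0) by (apply not_0_INR; lia). cxs; field; auto. Qed.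

Section G.
Variable rho : R.
Local Notation L := (fps_log1p rho).
Local Notation p := (fps_pow (fps_log1p rho)).

Definition Gs (y : Cx) (N : nat) : Cx :=
  Csum (fun m => Cmul (exp_coeff m) (Cmul (Cpow y m) (fps_pow (fps_log1p rho) m N))) (S N).

Lemma G_eq y N : fps_comp exp_coeff (fps_scale y L) N = Gs y N.
Proof. unfold fps_comp, Gs. apply Csum_ext. intros. rewrite pow_scale. reflexivity. Qed.

Lemma Grec y n : Cmul (Cof (INR (S n))) (Gs y (S n)) = Cmul (Cof rho) (Cmul (Csub y (Cof (INR n))) (Gs y n)).
Proof.
  set (T := fun m => Cmul (exp_coeff m) (Cmul (Cpow y m) (p m n))).
  assert (E : Csum (fun m => T (S m)) (S n) = Cadd (Csum T (S n)) (Copp (T O))).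
  { rewrite (Csum_S_l T n). simpl Csum at 1. unfold T at 2.
    rewrite (pow_vanish (fps_log1p rho) eq_refl (S n) n) by lia. cx. }
  unfold Gs. rewrite <- Csum_mul_l. rewrite Csum_S_l.
  rewrite (Csum_ext _ (fun m => Cadd (Cmul (Cmul (Cof rho) y) (T m))
        (Cmul (Copp (Cmul (Cof rho) (Cof (INR n)))) (T (S m))))).
  2:{ intros m Hm. unfold T. change (Cpow y (S m)) with (Cmul y (Cpow y m)).
      pose proof (Rrec rho m n) as R.
      transitivity (Cadd (Cmul (Cmul (exp_coeff (S m)) (Cmul y (Cpow y m)))
         (Cadd (Cmul (Cof (INR (S n))) (p (S m) (S n))) (Cmul (Cof rho) (Cmul (Cof (INR n)) (p (S m) n)))))
         (Copp (Cmul (Cmul (Cof rho) (Cof (INR n))) (Cmul (exp_coeff (S m)) (Cmul (Cmul y (Cpow y m)) (p (S m) n)))))).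
      { cx. }
      rewrite R. unfold exp_coeff. cxs; rewrite fact_simpl, mult_INR;
      assert (INR (S m) <> 0) by (apply not_0_INR; lia); pose proof (INR_fact_neq_0 m); field; auto. }
  rewrite Csum_add, !Csum_mul_l. fold T. rewrite E.
  unfold T. change (fps_pow (fps_log1p rho) 0 (S n)) with C0.
  change (p 0 n) with (fps_one n).
  destruct n; cxs; cbn [INR]; ring.
Qed.

Lemma Gfall y n : Gs y n = Cmul (Cof (rho ^ n / INR (fact n))) (Cfalling y n).
Proof.
  induction n.
  - unfold Gs. simpl. unfold exp_coeff. cxs; simpl; field.
  - rewrite (cancelS _ _ _ (Grec y n)). rewrite IHn.
    change (Cfalling y (S n)) with (Cmul (Cfalling y n) (Csub y (Cof (INR n)))).
    assert (INR (S n) <> 0) by (apply not_0_INR; lia). pose proof (INR_fact_neq_0 n).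
    cxs; rewrite fact_simpl, mult_INR; cbn [pow]; field; auto.
Qed.

Lemma G0 y : Gs y O = C1.
Proof. unfold Gs. simpl. unfold exp_coeff. cxs; simpl; field. Qed.

Lemma Gmul a b n : Gs (Cadd a b) n = fps_mul (Gs a) (Gs b) n.
Proof.
  induction n.
  - rewrite G0. unfold fps_mul. simpl. rewrite !G0. cx.
  - rewrite (cancelS _ _ _ (Grec _ n)). symmetry. apply cancelS.
    rewrite split_mul.
    rewrite (Csum_ext _ (fun i => Cmul (Cmul (Cof rho) (Csub a (Cof (INR i)))) (Cmul (Gs a i) (Gs b (n - i)%nat)))).
    2:{ intros i Hi. rewrite Grec. cx. }
    rewrite (Csum_ext (fun i => Cmul (Gs a i) (Cmul (Cof (INR (S (n - i)))) (Gs b (S (n - i))))) 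
       (fun i => Cmul (Cmul (Cof rho) (Csub b (Cof (INR (n - i))))) (Cmul (Gs a i) (Gs b (n - i)%nat)))).
    2:{ intros i Hi. rewrite Grec. cx. }
    rewrite <- Csum_add.
    rewrite (Csum_ext _ (fun i => Cmul (Cmul (Cof rho) (Csub (Cadd a b) (Cof (INR n)))) (Cmul (Gs a i) (Gs b (n - i)%nat)))).
    2:{ intros i Hi. rewrite (minus_INR n i) by lia. cx. }
    rewrite Csum_mul_l. change (Csum (fun i => Cmul (Gs a i) (Gs b (n - i)%nat)) (S n)) with (fps_mul (Gs a) (Gs b) n).
    rewrite <- IHn. cx.
Qed.
End G.

Fixpoint Rsum (f : nat -> R) (n : nat) : R :=
  match n with O => 0 | S m => Rsum f m + f m end.

Lemma Rsum_ext f g n : (forall i, (i < n)%nat -> f i = g i) -> Rsum f n = Rsum g n.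
Proof. induction n; intros H; simpl; auto. rewrite IHn by (intros; apply H; lia). rewrite H by lia; auto. Qed.

Lemma Rsum_mul_l c f n : c * Rsum f n = Rsum (fun i => c * f i) n.
Proof. induction n; simpl. ring. rewrite <- IHn. ring. Qed.

Lemma Cre_Csum f n : Cre (Csum f n) = Rsum (fun m => Cre (f m)) n.
Proof. induction n; simpl; auto. rewrite IHn. auto. Qed.
Lemma Cim_Csum f n : Cim (Csum f n) = Rsum (fun m => Cim (f m)) n.
Proof. induction n; simpl; auto. rewrite IHn. auto. Qed.

Lemma conv_lin (alpha r : nat -> R) : (forall m, Rabs (r m) < 1) -> forall N,
  Un_cv (fun K => sum_f_R0 (fun j => Rsum (fun m => alpha m * r m ^ j) N) K)
        (Rsum (fun m => alpha m / (1 - r m)) N).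
Proof.
  intros Hr N. induction N.
  - simpl. replace (fun K => sum_f_R0 (fun _ : nat => 0) K) with (fun _ : nat => 0).
    + intros eps He. exists O. intros. unfold Rdist. rewrite Rminus_diag, Rabs_R0. auto.
    + apply functional_extensionality. intro K. induction K; simpl; auto. rewrite <- IHK; ring.
  - simpl. replace (fun K => sum_f_R0 (fun j => Rsum (fun m => alpha m * r m ^ j) N + alpha N * r N ^ j) K)
     with (fun K => sum_f_R0 (fun j => Rsum (fun m => alpha m * r m ^ j) N) K + alpha N * sum_f_R0 (fun j => 1 * r N ^ j) K).
    + apply CV_plus. auto. unfold Rdiv. apply (CV_mult (fun _ => alpha N)).
      * intros eps He. exists O. intros. unfold Rdist. rewrite Rminus_diag, Rabs_R0. auto.
      * apply (GP_infinite (r N) (Hr N)).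
    + apply functional_extensionality. intro K. rewrite sum_plus. f_equal.
      rewrite scal_sum. apply sum_eq. intros. ring.
Qed.

Lemma Rseries_lim u l : Un_cv (fun K => sum_f_R0 u K) l -> Rseries u = l.
Proof. intros H. unfold Rseries. apply (UL_sequence (fun K => sum_f_R0 u K)).
 apply epsilon_spec. exists l; auto. auto. Qed.

Section Jack.
Variable q : R.
Hypothesis Hq : 0 <= q < 1.

Lemma qpow_lt m : 0 <= q ^ S m < 1.
Proof. apply pow_lt_1_compat; auto; lia. Qed.

Lemma qnum_nz m : qnum q (S m) <> 0.
Proof. unfold qnum. pose proof (qpow_lt m). apply Rmult_integral_contrapositive_currified.
 lra. apply Rinv_neq_0_compat. lra. Qed.

Lemma Jack1 N d : jackson q (fun x => Csum (fun m => Cmul (d m) (Cof (x ^ m))) N)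
  = Csum (fun m => Cmul (d m) (Cof (/ qnum q (S m)))) N.
Proof.
  assert (Hr : forall m, Rabs (q ^ S m) < 1).
  { intros m. pose proof (qpow_lt m). rewrite Rabs_pos_eq; lra. }
  assert (Hp : forall j m, q ^ j * (q ^ j) ^ m = (q ^ S m) ^ j).
  { intros j m. rewrite <- (pow_mult q j m), <- (pow_mult q (S m) j).
    replace (S m * j)%nat with (j + j * m)%nat by lia. rewrite pow_add. ring. }
  unfold jackson, Cseries. cxs.
  - rewrite Cre_Csum. cbn [Cre Cmul Cof].
    rewrite (Rseries_lim _ (Rsum (fun m => Cre (d m) / (1 - q ^ S m)) N)).
    + rewrite Rsum_mul_l. apply Rsum_ext. intros i _. pose proof (qpow_lt i). unfold qnum. cbn [Cre Cim Cof]. field. lra.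
    + eapply Un_cv_ext. 2: apply (conv_lin (fun m => Cre (d m)) (fun m => q ^ S m) Hr N).
      intros K. apply sum_eq. intros j _. cbn [Cre Cscale]. rewrite Cre_Csum, Rsum_mul_l.
      apply Rsum_ext. intros m _. cbn [Cre Cim Cmul Cof]. rewrite <- Hp. ring.
  - rewrite Cim_Csum. cbn [Cim Cmul Cof].
    rewrite (Rseries_lim _ (Rsum (fun m => Cim (d m) / (1 - q ^ S m)) N)).
    + rewrite Rsum_mul_l. apply Rsum_ext. intros i _. pose proof (qpow_lt i). unfold qnum. cbn [Cre Cim Cof]. field. lra.
    + eapply Un_cv_ext. 2: apply (conv_lin (fun m => Cim (d m)) (fun m => q ^ S m) Hr N).
      intros K. apply sum_eq. intros j _. cbn [Cim Cscale]. rewrite Cim_Csum, Rsum_mul_l.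
      apply Rsum_ext. intros m _. cbn [Cre Cim Cmul Cof]. rewrite <- Hp. ring.
Qed.

Lemma JackPoly k : forall c N,
  jackson_iter q k (fun xs => Csum (fun m => Cmul (c m) (Cof (prodR xs ^ m))) N)
  = Csum (fun m => Cmul (c m) (Cof (/ qnum q (S m) ^ k))) N.
Proof.
  induction k; intros c N.
  - simpl. apply Csum_ext. intros. rewrite pow1. cxs; simpl; field.
  - simpl jackson_iter.
    replace (fun x => jackson_iter q k (fun xs => Csum (fun m => Cmul (c m) (Cof ((x * prodR xs) ^ m))) N))
      with (fun x => Csum (fun m => Cmul (Cmul (c m) (Cof (/ qnum q (S m) ^ k))) (Cof (x ^ m))) N).
    + rewrite (Jack1 N (fun m => Cmul (c m) (Cof (/ qnum q (S m) ^ k)))). apply Csum_ext. intros m _. pose proof (qnum_nz m).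
      cxs; cbn [pow]; field; split; auto; apply pow_nonzero; auto.
    + apply functional_extensionality. intro x.
      transitivity (Csum (fun m => Cmul (Cmul (c m) (Cof (x ^ m))) (Cof (/ qnum q (S m) ^ k))) N).
      { apply Csum_ext. intros; cx. }
      rewrite <- (IHk (fun m => Cmul (c m) (Cof (x ^ m)))).
      f_equal. apply functional_extensionality. intro xs. apply Csum_ext. intros.
      rewrite Rpow_mult_distr. cx.
Qed.
End Jack.

Lemma Csum_mul_r c f n : Csum (fun i => Cmul (f i) c) n = Cmul (Csum f n) c.
Proof. induction n; simpl. cx. rewrite IHn. cx. Qed.

Lemma Cpow_mul c x m : Cpow (Cmul c (Cof x)) m = Cmul (Cpow c m) (Cof (x ^ m)).
Proof. induction m; simpl. cx. rewrite IHm. cx. Qed.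

Lemma Cmul_assoc_aux a b d : Cmul a (Cmul b d) = Cmul (Cmul a b) d.
Proof. cx. Qed.

Lemma Cscale_Cof r a : Cscale r a = Cmul (Cof r) a.
Proof. cx. Qed.

Theorem theorem5 (k : nat) (rho q : R) (z : Cx) :
  (1 <= k)%nat -> rho <> 0 -> 0 <= q < 1 ->
  forall n : nat,
    lhs_series k rho q z n = Cscale (/ INR (fact n)) (qpolyCauchy2 k rho q n z).
Proof.
  intros Hk Hrho Hq n. unfold lhs_series, qpolyCauchy2.
  set (a := Cscale (/ rho) z). set (c := Cof (- / rho)).
  set (pp := fps_pow (fps_log1p rho)).
  assert (Hsc0 : fps_scale c (fps_log1p rho) O = C0) by (unfold fps_scale, fps_log1p; cx).
  assert (HH : forall j, (j <= n)%nat ->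
    fps_comp (Lif_coeff k q) (fps_scale c (fps_log1p rho)) j =
    Csum (fun m => Cmul (Lif_coeff k q m) (Cmul (Cpow c m) (pp m j))) (S n)).
  { intros j Hj. rewrite (comp_range _ _ j (S n)) by (auto; lia).
    apply Csum_ext; intros; rewrite pow_scale; auto. }
  assert (HG : forall y j, (j <= n)%nat -> Gs rho y j =
     Csum (fun m => Cmul (exp_coeff m) (Cmul (Cpow y m) (pp m j))) (S n)).
  { intros y j Hj. unfold Gs. symmetry. apply Csum_trunc. lia. intros i Hi. unfold pp.
    rewrite pow_vanish by (auto; lia). cx. }
  assert (Hrn : rho ^ n <> 0) by (apply pow_nonzero; auto).
  pose proof (INR_fact_neq_0 n) as Hfn.
  set (K := INR (fact n) / rho ^ n).
  set (D := fun m => Cmul (Cof K) (Csum (fun i => Cmul (Gs rho a i)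
              (Cmul (exp_coeff m) (Cmul (Cpow c m) (pp m (n - i)%nat)))) (S n))).
  replace (fps_comp exp_coeff (fps_scale a (fps_log1p rho))) with (Gs rho a)
    by (apply functional_extensionality; intro; rewrite G_eq; auto).
  unfold fps_mul.
  rewrite (Csum_ext _ (fun i => Csum (fun m => Cmul (Gs rho a i) (Cmul (Lif_coeff k q m)
      (Cmul (Cpow c m) (pp m (n - i)%nat)))) (S n))).
  2:{ intros i Hi. rewrite HH by lia. rewrite <- Csum_mul_l. auto. }
  replace (fun xs => Cfalling (Cscale (/ rho) (Csub z (Cof (prodR xs)))) n)
    with (fun xs => Csum (fun m => Cmul (D m) (Cof (prodR xs ^ m))) (S n)).
  2:{ apply functional_extensionality. intro xs. set (x := prodR xs).
      symmetry.
      transitivity (Cmul (Cof K) (Gs rho (Cadd a (Cmul c (Cof x))) n)).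
      { rewrite Gfall. replace (Cscale (/ rho) (Csub z (Cof x))) with (Cadd a (Cmul c (Cof x)))
          by (unfold a, c; cxs; field; auto).
        unfold K. cxs; field; auto. }
      rewrite Gmul. unfold fps_mul at 1.
      rewrite (Csum_ext (fun i => Cmul (Gs rho a i) (Gs rho (Cmul c (Cof x)) (n - i)%nat))
        (fun i => Csum (fun m => Cmul (Gs rho a i) (Cmul (exp_coeff m) (Cmul (Cpow (Cmul c (Cof x)) m) (pp m (n - i)%nat)))) (S n))).
      2:{ intros i Hi. rewrite (HG (Cmul c (Cof x))) by lia. rewrite <- Csum_mul_l. auto. }
      rewrite Csum_swap. rewrite <- Csum_mul_l. apply Csum_ext. intros m Hm.
      unfold D. rewrite <- Cmul_assoc_aux. rewrite <- Csum_mul_r. f_equal. apply Csum_ext. intros i Hi.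
      rewrite Cpow_mul. cx. }
  rewrite JackPoly by auto.
  rewrite Csum_swap. rewrite !Cscale_Cof. rewrite <- !Csum_mul_l. apply Csum_ext. intros m Hm.
  pose proof (qnum_nz q Hq m) as Hqm. pose proof (INR_fact_neq_0 m) as Hfm.
  assert (Hqk : qnum q (S m) ^ k <> 0) by (apply pow_nonzero; auto).
  unfold D.
  match goal with |- _ = Cmul ?A (Cmul ?B (Cmul (Cmul ?C ?S) ?E)) =>
    transitivity (Cmul (Cmul A (Cmul B (Cmul C E))) S); [| cx] end.
  rewrite <- Csum_mul_l. apply Csum_ext. intros i Hi.
  unfold Lif_coeff, exp_coeff, K. cxs; field; auto.
Qed.
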